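(* Let $h:\mathbb{R}\to\mathbb{R}$ be continuous and let $u_1,u_2$ be any pair of real-valued linearly independent solutions of $u''(x)+h(x)u(x)=0$, with Wronskian $W=u'_1(x)u_2(x)-u_1(x)u'_2(x)\neq0$. Let $X_0\in\mathbb{R}$ and fix either choice of sign $\pm$. Then the map $(x,\varPhi)\mapsto(X,Y)$ given by \[ X(x,\varPhi)=X_0\pm W^{-1}\frac{\varPhi^2u_1(x)u_2(x)+u'_1(x)u'_2(x)}{\varPhi^2[u_1(x)]^2+[u'_1(x)]^2},\qquad Y(x,\varPhi)=\frac{\varPhi}{\varPhi^2[u_1(x)]^2+[u'_1(x)]^2}, \] is a local diffeomorphism from the Riemannian manifold $\mathbb{M}_h=(\mathcal{H}_0,g_h)$ to the Poincaré upper half plane $\mathbb{H}=(\mathcal{H},g_{\mathbb{H}})$, i.e. a local diffeomorphism $\mathcal{H}_0\to\mathcal{H}$ under which $g_{\mathbb{H}}$ pulls back to $g_h$.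
   Context: $\mathcal{H}=\{(X,Y)\in\mathbb{R}^2\mid Y>0\}$ with metric $g_{\mathbb{H}}=(dX^2+dY^2)/Y^2$ is the Poincaré upper half plane $\mathbb{H}$. $\mathcal{H}_0=\{(x,\varPhi)\in\mathbb{R}^2\mid\varPhi>0,\ \varPhi^2\neq h(x)\}$ with metric $g_h=\left[(h(x)-\varPhi^2)^2dx^2+d\varPhi^2\right]/\varPhi^2$ is $\mathbb{M}_h$. *)

(* Defs.v *)
From Stdlib Require Import Reals.
From Coquelicot Require Import Coquelicot.
Open Scope R_scope.

Definition partial1 (f : R * R -> R) (p : R * R) : R :=
  Derive (fun t => f (t, snd p)) (fst p).
Definition partial2 (f : R * R -> R) (p : R * R) : R :=
  Derive (fun t => f (fst p, t)) (snd p).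

Definition C1_fun_on (D : R * R -> Prop) (f : R * R -> R) : Prop :=
  forall p, D p ->
    ex_derive (fun t => f (t, snd p)) (fst p) /\
    ex_derive (fun t => f (fst p, t)) (snd p) /\
    continuous (partial1 f) p /\ continuous (partial2 f) p.

Definition C1_on (D : R * R -> Prop) (F : R * R -> R * R) : Prop :=
  C1_fun_on D (fun p => fst (F p)) /\ C1_fun_on D (fun p => snd (F p)).

Definition local_diffeo (D E : R * R -> Prop) (F : R * R -> R * R) : Prop :=
  (forall p, D p -> E (F p)) /\
  C1_on D F /\
  forall p, D p ->
    exists (U V : R * R -> Prop) (G : R * R -> R * R),
      open U /\ open V /\ U p /\
      (forall q, U q -> D q) /\ (forall v, V v -> E v) /\
      (forall q, U q -> V (F q)) /\ (forall v, V v -> U (G v)) /\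
      (forall q, U q -> G (F q) = q) /\ (forall v, V v -> F (G v) = v) /\
      C1_on V G.

Definition dmap (F : R * R -> R * R) (p v : R * R) : R * R :=
  (partial1 (fun q => fst (F q)) p * fst v + partial2 (fun q => fst (F q)) p * snd v,
   partial1 (fun q => snd (F q)) p * fst v + partial2 (fun q => snd (F q)) p * snd v).

(** A Riemannian metric on (an open subset of) R^2, given pointwise as a
    bilinear form on tangent vectors. *)
Definition metric2 := R * R -> R * R -> R * R -> R.

Definition pullback_eq (D : R * R -> Prop) (F : R * R -> R * R)
    (g2 g1 : metric2) : Prop :=
  forall p, D p -> forall v w : R * R, g2 (F p) (dmap F p v) (dmap F p w) = g1 p v w.

Definition H_set (P : R * R) : Prop := snd P > 0.
Definition g_H : metric2 :=
  fun P v w => (fst v * fst w + snd v * snd w) / (snd P) ^ 2.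

(** The manifold M_h = (H_0, g_h). Coordinates p = (x, Phi). *)
Definition H0_set (h : R -> R) (p : R * R) : Prop :=
  snd p > 0 /\ (snd p) ^ 2 <> h (fst p).
Definition g_h (h : R -> R) : metric2 :=
  fun p v w =>
    ((h (fst p) - (snd p) ^ 2) ^ 2 * (fst v * fst w) + snd v * snd w) / (snd p) ^ 2.

(** The map (x, Phi) |-> (X, Y) of the statement; [s] is the sign (+1 or -1). *)
Definition XY_map (u1 du1 u2 du2 : R -> R) (W X0 s : R) (p : R * R) : R * R :=
  let x := fst p in let Phi := snd p in
  let den := Phi ^ 2 * (u1 x) ^ 2 + (du1 x) ^ 2 in
  (X0 + s * / W * ((Phi ^ 2 * u1 x * u2 x + du1 x * du2 x) / den),
   Phi / den).

(* Main.v *)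
Require Import Defs.
From Stdlib Require Import Reals Lra Lia.
From Coquelicot Require Import Coquelicot.
From Stdlib Require Import ClassicalEpsilon.
Open Scope R_scope.
Lemma ballR (x y e : R) : ball x e y <-> Rabs (y - x) < e.
Proof. unfold ball; simpl; unfold AbsRing_ball, abs, minus, plus, opp; simpl. tauto. Qed.

Lemma ball2 (p q : R * R) e : ball p e q <-> Rabs (fst q - fst p) < e /\ Rabs (snd q - snd p) < e.
Proof. destruct p, q. change (ball r e r1 /\ ball r0 e r2 <-> Rabs (r1 - r) < e /\ Rabs (r2 - r0) < e).
rewrite !ballR; tauto. Qed.

Lemma ball3 (p q : R * (R * R)) e : ball p e q <->
  Rabs (fst q - fst p) < e /\ Rabs (fst (snd q) - fst (snd p)) < e /\ Rabs (snd (snd q) - snd (snd p)) < e.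
Proof. destruct p as [a [b c]], q as [a' [b' c']].
change (ball a e a' /\ ball (b,c) e (b',c') <-> Rabs (a' - a) < e /\ Rabs (b' - b) < e /\ Rabs (c' - c) < e).
rewrite ballR, ball2; simpl; tauto. Qed.

Definition cont3 (f : R -> R -> R -> R) (x X Y : R) : Prop :=
  forall eps, 0 < eps -> exists d, 0 < d /\ forall x' X' Y',
    Rabs (x' - x) < d -> Rabs (X' - X) < d -> Rabs (Y' - Y) < d ->
    Rabs (f x' X' Y' - f x X Y) < eps.

Definition ccont3 (f : R -> R -> R -> R) (x X Y : R) : Prop :=
  continuous (fun q : R * (R * R) => f (fst q) (fst (snd q)) (snd (snd q))) (x, (X, Y)).

Lemma ccont3_cont3 f x X Y : ccont3 f x X Y -> cont3 f x X Y.
Proof.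
intros H eps Heps.
specialize (H (ball (f x X Y) (mkposreal eps Heps)) (locally_ball _ _)).
destruct H as [d Hd]. exists d; split; [apply cond_pos|].
intros x' X' Y' H1 H2 H3.
specialize (Hd (x', (X', Y'))). rewrite ball3 in Hd. simpl in Hd.
rewrite <- ballR. apply Hd. auto.
Qed.

Lemma cont_eps2 (F : R * R -> R) p :
  continuous F p <-> forall eps, 0 < eps -> exists d, 0 < d /\ forall q,
    Rabs (fst q - fst p) < d -> Rabs (snd q - snd p) < d -> Rabs (F q - F p) < eps.
Proof.
split.
- intros H eps Heps.
  specialize (H (ball (F p) (mkposreal eps Heps)) (locally_ball _ _)).
  destruct H as [d Hd]. exists d; split; [apply cond_pos|].
  intros q H1 H2. rewrite <- ballR. apply Hd. rewrite ball2. auto.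
- intros H P [e He]. destruct (H e (cond_pos e)) as [d [Hd Hq]].
  exists (mkposreal d Hd). intros q Hq'. apply He. rewrite ballR. rewrite ball2 in Hq'.
  apply Hq; apply Hq'.
Qed.

Lemma derive_cont_pt f x l : is_derive f x l -> continuity_pt f x.
Proof. intros H. apply derivable_continuous_pt. exists l. apply is_derive_Reals. exact H. Qed.

Lemma mvt_pt (f df : R -> R) a b :
  (forall x, Rmin a b <= x <= Rmax a b -> is_derive f x (df x)) ->
  exists c, Rmin a b <= c <= Rmax a b /\ f b - f a = df c * (b - a).
Proof.
intros H. apply MVT_gen.
- intros x Hx; apply H; lra.
- intros x Hx. eapply derive_cont_pt. apply H; auto.
Qed.

Lemma lim_to_derive (g : R -> R) (t0 l : R) :
  is_lim (fun k => (g (t0 + k) - g t0) / k) 0 l -> is_derive g t0 l.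
Proof.
intros H. apply is_derive_Reals. apply is_lim_Reals_0 in H.
intros eps Heps. destruct (H eps Heps) as [a [Ha Hb]].
exists (mkposreal a Ha). intros k Hk1 Hk2.
specialize (Hb k). simpl in Hb. unfold R_dist in Hb. apply Hb. split; auto.
rewrite Rminus_0_r. exact Hk2.
Qed.

Lemma derive_to_lim (g : R -> R) (t0 l : R) :
  is_derive g t0 l -> is_lim (fun k => (g (t0 + k) - g t0) / k) 0 l.
Proof.
intros H. apply is_derive_Reals in H. apply is_lim_Reals_1.
intros eps Heps. destruct (H eps Heps) as [a Ha].
exists a. split; [apply cond_pos|]. intros k [Hk1 Hk2].
simpl. unfold R_dist. apply Ha; auto. simpl in Hk2; unfold R_dist in Hk2.
rewrite Rminus_0_r in Hk2. exact Hk2.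
Qed.

Lemma lim_eps (A : R -> R) (L : R) : is_lim A 0 L <->
  forall eps, 0 < eps -> exists a, 0 < a /\ forall k, k <> 0 -> Rabs k < a -> Rabs (A k - L) < eps.
Proof.
split.
- intros H. apply is_lim_Reals_0 in H. intros eps Heps.
  destruct (H eps Heps) as [a [Ha Hb]]. exists a; split; auto.
  intros k Hk1 Hk2. specialize (Hb k). simpl in Hb. unfold R_dist in Hb. apply Hb.
  split; auto. rewrite Rminus_0_r; auto.
- intros H. apply is_lim_Reals_1. intros eps Heps.
  destruct (H eps Heps) as [a [Ha Hb]]. exists a; split; auto.
  intros k [Hk1 Hk2]. simpl in *. unfold R_dist in *. rewrite Rminus_0_r in Hk2. auto.
Qed.

Lemma between_abs a b x : Rmin a b <= x <= Rmax a b -> Rabs (x - a) <= Rabs (b - a).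
Proof.
intros H. destruct (Rle_dec a b).
- rewrite Rmin_left, Rmax_right in H by lra. unfold Rabs; repeat destruct Rcase_abs; lra.
- rewrite Rmin_right, Rmax_left in H by lra. unfold Rabs; repeat destruct Rcase_abs; lra.
Qed.

Lemma fchoice {A B : Type} (P : A -> B -> Prop) : (forall a, exists b, P a b) -> exists f, forall a, P a (f a).
Proof. intros H. exists (fun a => proj1_sig (constructive_indefinite_description _ (H a))).
intros a. exact (proj2_sig (constructive_indefinite_description _ (H a))). Qed.

Section Decomp.
Variables (phi phix phit : R -> R -> R) (g : R -> R) (t0 rho : R).
Hypothesis Hrho : 0 < rho.
Hypothesis Dx : forall x t, Rabs (t - t0) < rho -> is_derive (fun y => phi y t) x (phix x t).
Hypothesis Dt : forall x t, Rabs (t - t0) < rho -> is_derive (fun tau => phi x tau) t (phit x t).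
Hypothesis Cx : forall eps, 0 < eps -> exists d, 0 < d /\ forall x t,
  Rabs (x - g t0) < d -> Rabs (t - t0) < d -> Rabs (phix x t - phix (g t0) t0) < eps.
Hypothesis Ct : forall eps, 0 < eps -> exists d, 0 < d /\ forall x t,
  Rabs (x - g t0) < d -> Rabs (t - t0) < d -> Rabs (phit x t - phit (g t0) t0) < eps.
Hypothesis Cg : forall eps, 0 < eps -> exists d, 0 < d /\ forall t,
  Rabs (t - t0) < d -> Rabs (g t - g t0) < eps.

Lemma decomp : exists A B : R -> R,
  is_lim A 0 (phix (g t0) t0) /\ is_lim B 0 (phit (g t0) t0) /\
  forall k, Rabs k < rho ->
    phi (g (t0 + k)) (t0 + k) - phi (g t0) t0 = A k * (g (t0 + k) - g t0) + B k * k.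
Proof.
assert (Hc : forall k, exists c : R * R, Rabs k < rho ->
  (Rabs (fst c - g t0) <= Rabs (g (t0 + k) - g t0) /\
   phi (g (t0 + k)) (t0 + k) - phi (g t0) (t0 + k) = phix (fst c) (t0 + k) * (g (t0 + k) - g t0)) /\
  (Rabs (snd c - t0) <= Rabs k /\
   phi (g t0) (t0 + k) - phi (g t0) t0 = phit (g t0) (snd c) * k)).
{ intros k. destruct (Rlt_dec (Rabs k) rho) as [Hk|Hk]; [|exists (0,0); tauto].
  destruct (mvt_pt (fun y => phi y (t0 + k)) (fun y => phix y (t0 + k)) (g t0) (g (t0 + k))) as [c1 [Hc1 Ec1]].
  { intros; apply Dx. replace (t0 + k - t0) with k by ring. auto. }
  destruct (mvt_pt (fun tau => phi (g t0) tau) (fun tau => phit (g t0) tau) t0 (t0 + k)) as [c2 [Hc2 Ec2]].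
  { intros x Hx; apply Dt.
    apply Rle_lt_trans with (Rabs k); auto.
    replace (Rabs k) with (Rabs (t0 + k - t0)) by (f_equal; ring). apply between_abs; auto. }
  exists (c1, c2). intros _. simpl. split; split.
  - apply between_abs; auto.
  - exact Ec1.
  - replace (Rabs k) with (Rabs (t0 + k - t0)) by (f_equal; ring). apply between_abs; auto.
  - rewrite Ec2. ring. }
destruct (fchoice _ Hc) as [c Hcs].
exists (fun k => phix (fst (c k)) (t0 + k)), (fun k => phit (g t0) (snd (c k))).
split; [|split].
- apply lim_eps. intros eps Heps.
  destruct (Cx eps Heps) as [d1 [Hd1 H1]].
  destruct (Cg d1 Hd1) as [d2 [Hd2 H2]].
  exists (Rmin rho (Rmin d1 d2)). split.
  { apply Rmin_pos; auto. apply Rmin_pos; auto. }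
  intros k Hk0 Hk. 
  assert (Hk1 : Rabs k < rho) by (eapply Rlt_le_trans; [exact Hk| apply Rmin_l]).
  assert (Hk2 : Rabs k < d1) by (eapply Rlt_le_trans; [exact Hk| eapply Rle_trans; [apply Rmin_r|apply Rmin_l]]).
  assert (Hk3 : Rabs k < d2) by (eapply Rlt_le_trans; [exact Hk| eapply Rle_trans; [apply Rmin_r|apply Rmin_r]]).
  destruct (Hcs k Hk1) as [[Ha _] _].
  apply H1.
  + eapply Rle_lt_trans; [exact Ha|]. apply H2. replace (t0 + k - t0) with k by ring; auto.
  + replace (t0 + k - t0) with k by ring; auto.
- apply lim_eps. intros eps Heps.
  destruct (Ct eps Heps) as [d1 [Hd1 H1]].
  exists (Rmin rho d1). split.
  { apply Rmin_pos; auto. }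
  intros k Hk0 Hk. 
  assert (Hk1 : Rabs k < rho) by (eapply Rlt_le_trans; [exact Hk| apply Rmin_l]).
  assert (Hk2 : Rabs k < d1) by (eapply Rlt_le_trans; [exact Hk| apply Rmin_r]).
  destruct (Hcs k Hk1) as [_ [Ha _]].
  apply H1.
  + replace (g t0 - g t0) with 0 by ring. rewrite Rabs_R0; auto.
  + eapply Rle_lt_trans; eauto.
- intros k Hk. destruct (Hcs k Hk) as [[_ E1] [_ E2]].
  replace (phi (g (t0 + k)) (t0 + k) - phi (g t0) t0) with
    ((phi (g (t0 + k)) (t0 + k) - phi (g t0) (t0 + k)) + (phi (g t0) (t0 + k) - phi (g t0) t0)) by ring.
  rewrite E1, E2. reflexivity.
Qed.

Lemma ift_derive :
  (forall k, Rabs k < rho -> phi (g (t0 + k)) (t0 + k) = 0) ->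
  phix (g t0) t0 <> 0 ->
  is_derive g t0 (- (phit (g t0) t0 / phix (g t0) t0)).
Proof.
intros Hroot Hnz.
destruct decomp as [A [B [HA [HB HE]]]].
apply lim_to_derive.
assert (HL : is_lim (fun k => - (B k / A k)) 0 (- (phit (g t0) t0 / phix (g t0) t0))).
{ apply (is_lim_opp (fun k => B k / A k) 0 (phit (g t0) t0 / phix (g t0) t0)).
  apply (is_lim_div B A 0 (phit (g t0) t0) (phix (g t0) t0)); auto.
  - intros E; injection E; auto.
  - simpl. exact I. }
eapply is_lim_ext_loc; [|exact HL].
pose proof (proj1 (lim_eps A _) HA) as HA'. destruct (HA' (Rabs (phix (g t0) t0)) (Rabs_pos_lt _ Hnz)) as [a [Ha HAa]].
exists (mkposreal (Rmin a rho) (Rmin_pos _ _ Ha Hrho)). intros k Hk Hk0.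
rewrite ballR in Hk. simpl in Hk. rewrite Rminus_0_r in Hk.
assert (Hk1 : Rabs k < a) by (eapply Rlt_le_trans; [exact Hk| apply Rmin_l]).
assert (Hk2 : Rabs k < rho) by (eapply Rlt_le_trans; [exact Hk| apply Rmin_r]).
specialize (HAa k Hk0 Hk1).
assert (HAk : A k <> 0).
{ intros E. rewrite E in HAa. rewrite Rminus_0_l, Rabs_Ropp in HAa. lra. }
specialize (HE k Hk2). rewrite Hroot in HE by auto.
replace (phi (g t0) t0) with 0 in HE by (symmetry; replace t0 with (t0 + 0) by ring; apply Hroot; rewrite Rabs_R0; auto).
assert (E : A k * (g (t0 + k) - g t0) = - (B k * k)) by lra.
replace (g (t0 + k) - g t0) with (- (B k * k) / A k).
- field. auto.
- apply Rmult_eq_reg_l with (A k); auto. rewrite E. field. auto.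
Qed.

Lemma chain_derive g' :
  is_derive g t0 g' ->
  is_derive (fun t => phi (g t) t) t0 (phix (g t0) t0 * g' + phit (g t0) t0).
Proof.
intros Hg.
destruct decomp as [A [B [HA [HB HE]]]].
apply lim_to_derive.
apply derive_to_lim in Hg.
assert (HL : is_lim (fun k => A k * ((g (t0 + k) - g t0) / k) + B k) 0 (phix (g t0) t0 * g' + phit (g t0) t0)).
{ eapply is_lim_plus.
  - apply (is_lim_mult A _ 0 (phix (g t0) t0) g'); auto. simpl; exact I.
  - exact HB.
  - simpl. reflexivity. }
eapply is_lim_ext_loc; [|exact HL].
exists (mkposreal rho Hrho). intros k Hk Hk0.
rewrite ballR in Hk. simpl in Hk. rewrite Rminus_0_r in Hk.
rewrite HE by auto. field. auto.
Qed.

End Decomp.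
Section IFT3.
Variables f fx : R -> R -> R -> R.
Hypothesis Df : forall x X Y, is_derive (fun y => f y X Y) x (fx x X Y).
Hypothesis Cf : forall x X Y, cont3 f x X Y.
Hypothesis Cfx : forall x X Y, cont3 fx x X Y.

Lemma ift_unique X Y x1 d x x' :
  (forall y, Rabs (y - x1) <= d -> fx y X Y > 0) ->
  Rabs (x - x1) <= d -> Rabs (x' - x1) <= d -> f x X Y = 0 -> f x' X Y = 0 -> x = x'.
Proof.
intros Hpos H1 H2 E1 E2.
rewrite Rabs_le_between' in H1, H2.
assert (Hin : forall c, Rmin x x' <= c <= Rmax x x' -> Rabs (c - x1) <= d).
{ intros c Hc. rewrite Rabs_le_between'. destruct (Rle_dec x x').
  - rewrite Rmin_left, Rmax_right in Hc by lra. lra.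
  - rewrite Rmin_right, Rmax_left in Hc by lra. lra. }
destruct (mvt_pt (fun y => f y X Y) (fun y => fx y X Y) x x') as [c [Hc Ec]].
{ intros; apply Df. }
rewrite E1, E2 in Ec. specialize (Hpos c (Hin c Hc)).
destruct (Req_dec x x') as [|Hne]; auto.
exfalso. assert (fx c X Y * (x' - x) <> 0).
{ apply Rmult_integral_contrapositive_currified; lra. }
lra.
Qed.

Lemma ift_exist x1 X1 Y1 d0 :
  f x1 X1 Y1 = 0 -> fx x1 X1 Y1 > 0 -> 0 < d0 ->
  exists d r, 0 < d /\ d < d0 /\ 0 < r /\
    (forall x X Y, Rabs (x - x1) <= d -> Rabs (X - X1) < r -> Rabs (Y - Y1) < r -> fx x X Y > 0) /\
    (forall X Y, Rabs (X - X1) < r -> Rabs (Y - Y1) < r -> exists x, Rabs (x - x1) <= d /\ f x X Y = 0).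
Proof.
intros E0 Hp Hd0.
destruct (Cfx x1 X1 Y1 (fx x1 X1 Y1 / 2)) as [d1 [Hd1 H1]]; [lra|].
set (d := Rmin d0 d1 / 2).
assert (Hd : 0 < d) by (unfold d; pose proof (Rmin_pos d0 d1 Hd0 Hd1); lra).
assert (Hdd0 : d < d0) by (unfold d; pose proof (Rmin_l d0 d1); pose proof (Rmin_pos d0 d1 Hd0 Hd1); lra).
assert (Hdd1 : d < d1) by (unfold d; pose proof (Rmin_r d0 d1); pose proof (Rmin_pos d0 d1 Hd0 Hd1); lra).
assert (Hpos : forall x X Y, Rabs (x - x1) <= d -> Rabs (X - X1) < d1 -> Rabs (Y - Y1) < d1 -> fx x X Y > 0).
{ intros x X Y Hx HX HY. specialize (H1 x X Y ltac:(lra) HX HY).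
  apply Rabs_def2 in H1. lra. }
assert (Hplus : f (x1 + d) X1 Y1 > 0).
{ destruct (mvt_pt (fun y => f y X1 Y1) (fun y => fx y X1 Y1) x1 (x1 + d)) as [c [Hc Ec]].
  { intros; apply Df. }
  rewrite Rmin_left, Rmax_right in Hc by lra.
  rewrite E0 in Ec. assert (fx c X1 Y1 > 0).
  { apply Hpos; [rewrite Rabs_le_between'; lra| |]; unfold Rminus; rewrite Rplus_opp_r, Rabs_R0; auto. }
  replace (x1 + d - x1) with d in Ec by ring.
  assert (0 < fx c X1 Y1 * d) by (apply Rmult_lt_0_compat; lra). lra. }
assert (Hminus : f (x1 - d) X1 Y1 < 0).
{ destruct (mvt_pt (fun y => f y X1 Y1) (fun y => fx y X1 Y1) (x1 - d) x1) as [c [Hc Ec]].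
  { intros; apply Df. }
  rewrite Rmin_left, Rmax_right in Hc by lra.
  rewrite E0 in Ec. assert (fx c X1 Y1 > 0).
  { apply Hpos; [rewrite Rabs_le_between'; lra| |]; unfold Rminus; rewrite Rplus_opp_r, Rabs_R0; auto. }
  replace (x1 - (x1 - d)) with d in Ec by ring.
  assert (0 < fx c X1 Y1 * d) by (apply Rmult_lt_0_compat; lra). lra. }
destruct (Cf (x1 + d) X1 Y1 (f (x1 + d) X1 Y1)) as [d2 [Hd2 H2]]; [lra|].
destruct (Cf (x1 - d) X1 Y1 (- f (x1 - d) X1 Y1)) as [d3 [Hd3 H3]]; [lra|].
set (r := Rmin d1 (Rmin d2 d3)).
assert (Hr : 0 < r) by (unfold r; repeat apply Rmin_pos; auto).
assert (Hr1 : r <= d1) by apply Rmin_l.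
assert (Hr2 : r <= d2) by (unfold r; eapply Rle_trans; [apply Rmin_r|apply Rmin_l]).
assert (Hr3 : r <= d3) by (unfold r; eapply Rle_trans; [apply Rmin_r|apply Rmin_r]).
exists d, r. split; [auto|split; [auto|split; [auto|split]]].
- intros x X Y Hx HX HY. apply Hpos; auto; lra.
- intros X Y HX HY.
  assert (P1 : f (x1 + d) X Y > 0).
  { specialize (H2 (x1 + d) X Y). unfold Rminus at 1 in H2. rewrite Rplus_opp_r, Rabs_R0 in H2.
    specialize (H2 Hd2 ltac:(lra) ltac:(lra)). apply Rabs_def2 in H2. lra. }
  assert (P2 : f (x1 - d) X Y < 0).
  { specialize (H3 (x1 - d) X Y). unfold Rminus at 1 in H3. rewrite Rplus_opp_r, Rabs_R0 in H3.
    specialize (H3 Hd3 ltac:(lra) ltac:(lra)). apply Rabs_def2 in H3. lra. }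
  destruct (IVT_gen (fun y => f y X Y) (x1 - d) (x1 + d) 0) as [x [Hx Ex]].
  + intros y. eapply derive_cont_pt. apply Df.
  + rewrite Rmin_left, Rmax_right by lra. lra.
  + exists x. split; auto. rewrite Rmin_left, Rmax_right in Hx by lra.
    rewrite Rabs_le_between'. lra.
Qed.

End IFT3.
Section Tk.
Context {T : UniformSpace}.
Lemma cR_plus (f g : T -> R) p : continuous f p -> continuous g p -> continuous (fun q => f q + g q) p.
Proof. intros; apply (continuous_plus f g); auto. Qed.
Lemma cR_mult (f g : T -> R) p : continuous f p -> continuous g p -> continuous (fun q => f q * g q) p.
Proof. intros; apply (continuous_mult f g); auto. Qed.
Lemma cR_opp (f : T -> R) p : continuous f p -> continuous (fun q => - f q) p.
Proof. intros; apply (continuous_opp f); auto. Qed.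
Lemma cR_minus (f g : T -> R) p : continuous f p -> continuous g p -> continuous (fun q => f q - g q) p.
Proof. intros; apply cR_plus; auto; apply cR_opp; auto. Qed.
Lemma cR_const (c : R) p : continuous (fun _ : T => c) p.
Proof. apply continuous_const. Qed.
Lemma cR_comp (u : R -> R) (f : T -> R) p : continuous f p -> continuous u (f p) -> continuous (fun q => u (f q)) p.
Proof. intros; apply (continuous_comp f u); auto. Qed.
Lemma cR_inv (f : T -> R) p : continuous f p -> f p <> 0 -> continuous (fun q => / f q) p.
Proof. intros; apply (continuous_comp f (fun y => / y)); auto. apply continuous_Rinv; auto. Qed.
Lemma cR_div (f g : T -> R) p : continuous f p -> continuous g p -> g p <> 0 -> continuous (fun q => f q / g q) p.
Proof. intros; apply cR_mult; auto; apply cR_inv; auto. Qed.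
Lemma cR_pow (f : T -> R) n p : continuous f p -> continuous (fun q => f q ^ n) p.
Proof. intros H; induction n; simpl. apply cR_const. apply cR_mult; auto. Qed.
End Tk.

Lemma cfst {U V : UniformSpace} (p : U * V) : continuous (fun q => fst q) p.
Proof. destruct p; apply continuous_fst. Qed.
Lemma csnd {U V : UniformSpace} (p : U * V) : continuous (fun q => snd q) p.
Proof. destruct p; apply continuous_snd. Qed.
Lemma cpair {U V W : UniformSpace} (f : U -> V) (g : U -> W) p :
  continuous f p -> continuous g p -> continuous (fun q => (f q, g q)) p.
Proof.
intros Hf Hg. apply (continuous_comp_2 f g (fun a b => (a, b))); auto.
apply continuous_ext with (fun z => z). { intros [a b]; reflexivity. }
apply continuous_id.
Qed.
Lemma cfst' {U V W : UniformSpace} (f : W -> U * V) p : continuous f p -> continuous (fun q => fst (f q)) p.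
Proof. intros; apply (continuous_comp f fst); auto. apply cfst. Qed.
Lemma csnd' {U V W : UniformSpace} (f : W -> U * V) p : continuous f p -> continuous (fun q => snd (f q)) p.
Proof. intros; apply (continuous_comp f snd); auto. apply csnd. Qed.

Ltac cont :=
  match goal with
  | |- continuous (fun q => ?c) _ => apply cR_const
  | |- continuous (fun q => @?a q + @?b q) _ => apply (cR_plus a b); cont
  | |- continuous (fun q => @?a q - @?b q) _ => apply (cR_minus a b); cont
  | |- continuous (fun q => @?a q * @?b q) _ => apply (cR_mult a b); cont
  | |- continuous (fun q => @?a q / @?b q) _ => apply (cR_div a b); [cont|cont|]
  | |- continuous (fun q => - @?a q) _ => apply (cR_opp a); cont
  | |- continuous (fun q => / @?a q) _ => apply (cR_inv a); [cont|]
  | |- continuous (fun q => @?a q ^ ?n) _ => apply (cR_pow a n); cont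
  | |- continuous (fun q => fst q) _ => apply cfst
  | |- continuous (fun q => snd q) _ => apply csnd
  | |- continuous (fun q => fst (@?a q)) _ => apply (cfst' a); cont
  | |- continuous (fun q => snd (@?a q)) _ => apply (csnd' a); cont
  | |- continuous (fun q => ?c) _ => apply cR_const
  | |- continuous (fun q => ?u (@?a q)) _ => apply (cR_comp u a); [cont|]
  | |- _ => idtac
  end.

Lemma sliceX g x X Y : cont3 g x X Y -> forall eps, 0 < eps -> exists d, 0 < d /\ forall x' t,
  Rabs (x' - x) < d -> Rabs (t - X) < d -> Rabs (g x' t Y - g x X Y) < eps.
Proof.
intros H eps Heps. destruct (H eps Heps) as [d [Hd H']]. exists d; split; auto.
intros; apply H'; auto. unfold Rminus; rewrite Rplus_opp_r, Rabs_R0; auto.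
Qed.
Lemma sliceY g x X Y : cont3 g x X Y -> forall eps, 0 < eps -> exists d, 0 < d /\ forall x' t,
  Rabs (x' - x) < d -> Rabs (t - Y) < d -> Rabs (g x' X t - g x X Y) < eps.
Proof.
intros H eps Heps. destruct (H eps Heps) as [d [Hd H']]. exists d; split; auto.
intros; apply H'; auto. unfold Rminus; rewrite Rplus_opp_r, Rabs_R0; auto.
Qed.

Definition inB (X1 Y1 r : R) (v : R * R) := Rabs (fst v - X1) < r /\ Rabs (snd v - Y1) < r.


Lemma box_open a b r : open (inB a b r).
Proof.
intros [v1 v2] Hv. unfold inB in Hv. simpl in Hv. destruct Hv as [H1 H2].
set (m := Rmin (r - Rabs (v1 - a)) (r - Rabs (v2 - b))).
assert (Hm : 0 < m) by (apply Rmin_pos; lra).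
exists (mkposreal m Hm). intros [w1 w2] Hw. rewrite ball2 in Hw. simpl in Hw.
destruct Hw as [Hw1 Hw2]. unfold inB; simpl.
assert (m <= r - Rabs (v1 - a)) by apply Rmin_l.
assert (m <= r - Rabs (v2 - b)) by apply Rmin_r.
split.
- replace (w1 - a) with ((w1 - v1) + (v1 - a)) by ring.
  eapply Rle_lt_trans; [apply Rabs_triang|]. lra.
- replace (w2 - b) with ((w2 - v2) + (v2 - b)) by ring.
  eapply Rle_lt_trans; [apply Rabs_triang|]. lra.
Qed.

Lemma ccomp3 (phi : R -> R -> R -> R) (g : R * R -> R) v :
  continuous g v -> ccont3 phi (g v) (fst v) (snd v) ->
  continuous (fun w => phi (g w) (fst w) (snd w)) v.
Proof.
intros Hg Hp.
apply (continuous_comp (fun w => (g w, (fst w, snd w))) (fun q : R * (R * R) => phi (fst q) (fst (snd q)) (snd (snd q)))).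
- apply cpair; auto. apply cpair; [apply cfst|apply csnd].
- exact Hp.
Qed.

Section Main.
Variables (h u1 du1 u2 du2 : R -> R) (W X0 s : R).
Hypothesis Hh : forall x, continuous h x.
Hypothesis Hu1 : forall x, is_derive u1 x (du1 x).
Hypothesis Hdu1 : forall x, is_derive du1 x (- h x * u1 x).
Hypothesis Hu2 : forall x, is_derive u2 x (du2 x).
Hypothesis Hdu2 : forall x, is_derive du2 x (- h x * u2 x).
Hypothesis HW : forall x, W = du1 x * u2 x - u1 x * du2 x.
Hypothesis HW0 : W <> 0.
Hypothesis Hs : s = 1 \/ s = -1.

Let F := XY_map u1 du1 u2 du2 W X0 s.

Definition den x P := P ^ 2 * (u1 x) ^ 2 + (du1 x) ^ 2.
Definition Nn x P := P ^ 2 * u1 x * u2 x + du1 x * du2 x.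
Definition denx x P := 2 * u1 x * du1 x * (P ^ 2 - h x).
Definition Nx x P := (P ^ 2 - h x) * (du1 x * u2 x + u1 x * du2 x).
Definition F1x x P := s * / W * ((Nx x P * den x P - Nn x P * denx x P) / den x P ^ 2).
Definition F1p x P := s * / W * ((2 * P * u1 x * u2 x * den x P - Nn x P * (2 * P * (u1 x) ^ 2)) / den x P ^ 2).
Definition F2x x P := - P * denx x P / den x P ^ 2.
Definition F2p x P := (den x P - P * (2 * P * (u1 x) ^ 2)) / den x P ^ 2.

Lemma den_pos x P : P <> 0 -> 0 < den x P.
Proof.
intros HP. unfold den. destruct (Req_dec (u1 x) 0) as [E|E].
- rewrite E. assert (du1 x <> 0).
  { intros E'. apply HW0. rewrite (HW x), E, E'. ring. }
  assert (0 < du1 x * du1 x) by (destruct (Rlt_or_le 0 (du1 x)); [nra| assert (du1 x < 0) by lra; nra]).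
  simpl; nra.
- assert (0 < P * P) by (destruct (Rlt_or_le 0 P); [nra| assert (P < 0) by lra; nra]).
  assert (0 < u1 x * u1 x) by (destruct (Rlt_or_le 0 (u1 x)); [nra| assert (u1 x < 0) by lra; nra]).
  assert (0 <= du1 x ^ 2) by (simpl; nra). nra.
Qed.

Ltac exd := match goal with
  | |- ex_derive (fun y => u1 y) ?x => exact (ex_intro _ _ (Hu1 x))
  | |- ex_derive (fun y => du1 y) ?x => exact (ex_intro _ _ (Hdu1 x))
  | |- ex_derive (fun y => u2 y) ?x => exact (ex_intro _ _ (Hu2 x))
  | |- ex_derive (fun y => du2 y) ?x => exact (ex_intro _ _ (Hdu2 x))
  end.
Ltac rwD := rewrite ?(is_derive_unique _ _ _ (Hu1 _)), ?(is_derive_unique _ _ _ (Hdu1 _)),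
   ?(is_derive_unique _ _ _ (Hu2 _)), ?(is_derive_unique _ _ _ (Hdu2 _)).

Lemma dF1x x P : P <> 0 -> is_derive (fun t => fst (F (t, P))) x (F1x x P).
Proof.
intros HP. pose proof (den_pos x P HP) as Hd. unfold F, XY_map; simpl.
auto_derive.
- repeat match goal with |- _ /\ _ => split end; try exd; try exact I. unfold den in Hd. simpl in Hd. lra.
- rwD. unfold F1x, Nx, Nn, den, denx. field. split; auto. unfold den in Hd; simpl in Hd; lra.
Qed.


Lemma dF1p x P : P <> 0 -> is_derive (fun t => fst (F (x, t))) P (F1p x P).
Proof.
intros HP. pose proof (den_pos x P HP) as Hd. unfold F, XY_map; simpl.
auto_derive.
- repeat match goal with |- _ /\ _ => split end; try exact I. unfold den in Hd. simpl in Hd. lra.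
- unfold F1p, Nn, den. field. split; auto. unfold den in Hd; simpl in Hd; lra.
Qed.

Lemma dF2x x P : P <> 0 -> is_derive (fun t => snd (F (t, P))) x (F2x x P).
Proof.
intros HP. pose proof (den_pos x P HP) as Hd. unfold F, XY_map; simpl.
auto_derive.
- repeat match goal with |- _ /\ _ => split end; try exd; try exact I. unfold den in Hd. simpl in Hd. lra.
- rwD. unfold F2x, den, denx. field. unfold den in Hd; simpl in Hd; lra.
Qed.

Lemma dF2p x P : P <> 0 -> is_derive (fun t => snd (F (x, t))) P (F2p x P).
Proof.
intros HP. pose proof (den_pos x P HP) as Hd. unfold F, XY_map; simpl.
auto_derive.
- repeat match goal with |- _ /\ _ => split end; try exact I. unfold den in Hd. simpl in Hd. lra.
- unfold F2p, den. field. unfold den in Hd; simpl in Hd; lra.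
Qed.

Lemma Wne x : du1 x * u2 x - u1 x * du2 x <> 0.
Proof. rewrite <- HW; auto. Qed.

Lemma id_i x P : P <> 0 -> F1x x P * F1x x P + F2x x P * F2x x P = (h x - P ^ 2) ^ 2 / den x P ^ 2.
Proof.
intros HP. pose proof (den_pos x P HP) as Hd.
unfold F1x, F2x, Nx, Nn, denx in *. destruct Hs as [E|E]; rewrite E; rewrite (HW x);
unfold den in *; field; repeat match goal with |- _ /\ _ => split end; first [apply Wne | lra].
Qed.

Lemma id_ii x P : P <> 0 -> F1x x P * F1p x P + F2x x P * F2p x P = 0.
Proof.
intros HP. pose proof (den_pos x P HP) as Hd.
unfold F1x, F1p, F2x, F2p, Nx, Nn, denx in *. destruct Hs as [E|E]; rewrite E; rewrite (HW x);
unfold den in *; field; repeat match goal with |- _ /\ _ => split end; first [apply Wne | lra].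
Qed.

Lemma id_iii x P : P <> 0 -> F1p x P * F1p x P + F2p x P * F2p x P = 1 / den x P ^ 2.
Proof.
intros HP. pose proof (den_pos x P HP) as Hd.
unfold F1p, F2p, Nx, Nn, denx in *. destruct Hs as [E|E]; rewrite E; rewrite (HW x);
unfold den in *; field; repeat match goal with |- _ /\ _ => split end; first [apply Wne | lra].
Qed.


Lemma cu1 x : continuous u1 x.
Proof. apply (ex_derive_continuous u1 x). exists (du1 x); apply Hu1. Qed.
Lemma cdu1 x : continuous du1 x.
Proof. apply (ex_derive_continuous du1 x). exists (- h x * u1 x); apply Hdu1. Qed.
Lemma cu2 x : continuous u2 x.
Proof. apply (ex_derive_continuous u2 x). exists (du2 x); apply Hu2. Qed.
Lemma cdu2 x : continuous du2 x.
Proof. apply (ex_derive_continuous du2 x). exists (- h x * u2 x); apply Hdu2. Qed.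

Ltac cside := cbv beta; match goal with
  | |- continuous u1 _ => apply cu1
  | |- continuous du1 _ => apply cdu1
  | |- continuous u2 _ => apply cu2
  | |- continuous du2 _ => apply cdu2
  | |- continuous h _ => apply Hh
  | |- _ => idtac end.

Lemma locally_snd_ne (p : R * R) : snd p <> 0 -> locally p (fun q => snd q <> 0).
Proof.
intros H. exists (mkposreal (Rabs (snd p)) (Rabs_pos_lt _ H)). intros q Hq.
rewrite ball2 in Hq. destruct Hq as [_ Hq].
assert (Hq' : Rabs (@snd R R q - snd p) < Rabs (snd p)) by exact Hq.
intros E. change (@snd R R q = 0) in E. rewrite E in Hq'. rewrite Rminus_0_l, Rabs_Ropp in Hq'. lra.
Qed.

Lemma pF1x p : snd p <> 0 -> partial1 (fun q => fst (F q)) p = F1x (fst p) (snd p).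
Proof. intros H. unfold partial1. apply is_derive_unique. apply dF1x; auto. Qed.
Lemma pF1p p : snd p <> 0 -> partial2 (fun q => fst (F q)) p = F1p (fst p) (snd p).
Proof. intros H. unfold partial2. apply is_derive_unique. apply dF1p; auto. Qed.
Lemma pF2x p : snd p <> 0 -> partial1 (fun q => snd (F q)) p = F2x (fst p) (snd p).
Proof. intros H. unfold partial1. apply is_derive_unique. apply dF2x; auto. Qed.
Lemma pF2p p : snd p <> 0 -> partial2 (fun q => snd (F q)) p = F2p (fst p) (snd p).
Proof. intros H. unfold partial2. apply is_derive_unique. apply dF2p; auto. Qed.

Lemma den_ne (p : R * R) : snd p <> 0 -> snd p ^ 2 * u1 (fst p) ^ 2 + du1 (fst p) ^ 2 <> 0.
Proof. intros H. pose proof (den_pos (fst p) (snd p) H). unfold den in *. lra. Qed.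

Ltac nzside := cbv beta; first [apply pow_nonzero; apply den_ne; auto | apply den_ne; auto].

Lemma C1F : C1_on (fun p => snd p <> 0) F.
Proof.
split; intros p Hp.
- split; [|split; [|split]].
  + exists (F1x (fst p) (snd p)). apply dF1x; auto.
  + exists (F1p (fst p) (snd p)). apply dF1p; auto.
  + apply (continuous_ext_loc _ (fun q => F1x (fst q) (snd q))).
    * eapply filter_imp; [|exact (locally_snd_ne p Hp)]. intros q Hq. symmetry. apply pF1x; auto.
    * unfold F1x, Nx, Nn, den, denx. cont; cside; nzside.
  + apply (continuous_ext_loc _ (fun q => F1p (fst q) (snd q))).
    * eapply filter_imp; [|exact (locally_snd_ne p Hp)]. intros q Hq. symmetry. apply pF1p; auto.
    * unfold F1p, Nx, Nn, den, denx. cont; cside; nzside.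
- split; [|split; [|split]].
  + exists (F2x (fst p) (snd p)). apply dF2x; auto.
  + exists (F2p (fst p) (snd p)). apply dF2p; auto.
  + apply (continuous_ext_loc _ (fun q => F2x (fst q) (snd q))).
    * eapply filter_imp; [|exact (locally_snd_ne p Hp)]. intros q Hq. symmetry. apply pF2x; auto.
    * unfold F2x, Nx, Nn, den, denx. cont; cside; nzside.
  + apply (continuous_ext_loc _ (fun q => F2p (fst q) (snd q))).
    * eapply filter_imp; [|exact (locally_snd_ne p Hp)]. intros q Hq. symmetry. apply pF2p; auto.
    * unfold F2p, Nx, Nn, den, denx. cont; cside; nzside.
Qed.

Lemma pullbackF : pullback_eq (fun p => snd p <> 0) F g_H (g_h h).
Proof.
intros p Hp v w. unfold g_H, g_h, dmap.
rewrite pF1x, pF1p, pF2x, pF2p by auto.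
destruct p as [x P]. simpl in *.
set (A := F1x x P). set (B := F1p x P). set (C := F2x x P). set (D := F2p x P).
replace ((A * fst v + B * snd v) * (A * fst w + B * snd w) + (C * fst v + D * snd v) * (C * fst w + D * snd w))
  with ((A * A + C * C) * (fst v * fst w) + (A * B + C * D) * (fst v * snd w + snd v * fst w)
        + (B * B + D * D) * (snd v * snd w)) by ring.
unfold A, B, C, D. rewrite id_i, id_ii, id_iii by auto.
pose proof (den_pos x P Hp). unfold F, XY_map, den in *; simpl.
field. lra.
Qed.


Definition aa (X : R) : R := s * W * (X - X0).
Definition bb (Y : R) : R := W * Y.
Definition fR (x X Y : R) : R := - (u1 x * du1 x) * (aa X ^ 2 + bb Y ^ 2) + (u1 x * du2 x + u2 x * du1 x) * aa X - u2 x * du2 x.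
Definition fRx (x X Y : R) : R := - (du1 x ^ 2 - h x * u1 x ^ 2) * (aa X ^ 2 + bb Y ^ 2)
   + 2 * (du1 x * du2 x - h x * u1 x * u2 x) * aa X - (du2 x ^ 2 - h x * u2 x ^ 2).
Definition fRX (x X Y : R) : R := (- (u1 x * du1 x) * (2 * aa X) + (u1 x * du2 x + u2 x * du1 x)) * (s * W).
Definition fRY (x X Y : R) : R := - (u1 x * du1 x) * (2 * bb Y) * W.
Definition Dd (x X Y : R) : R := (u2 x - u1 x * aa X) ^ 2 + u1 x ^ 2 * bb Y ^ 2.
Definition ph (x X Y : R) : R := W * bb Y / Dd x X Y.
Definition Ddx (x X Y : R) : R := 2 * (u2 x - u1 x * aa X) * (du2 x - du1 x * aa X) + 2 * u1 x * du1 x * bb Y ^ 2.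
Definition DdX (x X Y : R) : R := 2 * (u2 x - u1 x * aa X) * (- u1 x * (s * W)).
Definition DdY (x X Y : R) : R := 2 * u1 x ^ 2 * bb Y * W.
Definition phx (x X Y : R) : R := - (W * bb Y) * Ddx x X Y / Dd x X Y ^ 2.
Definition phX (x X Y : R) : R := - (W * bb Y) * DdX x X Y / Dd x X Y ^ 2.
Definition phY (x X Y : R) : R := (W * W * Dd x X Y - W * bb Y * DdY x X Y) / Dd x X Y ^ 2.

Lemma Dd_pos x X Y : Y <> 0 -> 0 < Dd x X Y.
Proof.
intros HY. unfold Dd, bb. assert (Hb : W * Y <> 0) by (apply Rmult_integral_contrapositive_currified; auto).
destruct (Req_dec (u1 x) 0) as [E|E].
- rewrite E. assert (u2 x <> 0).
  { intros E'. apply HW0. rewrite (HW x), E, E'. ring. }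
  assert (0 < u2 x * u2 x) by (destruct (Rlt_or_le 0 (u2 x)); [nra| assert (u2 x < 0) by lra; nra]).
  simpl. assert (0 * (W * Y) = 0) by ring. nra.
- assert (0 < u1 x * u1 x) by (destruct (Rlt_or_le 0 (u1 x)); [nra| assert (u1 x < 0) by lra; nra]).
  assert (0 < (W * Y) * (W * Y)) by (destruct (Rlt_or_le 0 (W * Y)); [nra| assert (W * Y < 0) by lra; nra]).
  assert (0 <= (u2 x - u1 x * aa X) * (u2 x - u1 x * aa X)) by apply Rle_0_sqr.
  assert (0 < (u1 x * u1 x) * ((W * Y) * (W * Y))) by (apply Rmult_lt_0_compat; auto).
  simpl. nra.
Qed.

Lemma dfR_x x X Y : is_derive (fun t => fR t X Y) x (fRx x X Y).
Proof.
unfold fR. auto_derive.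
- repeat match goal with |- _ /\ _ => split end; try exd; try exact I.
- rwD. unfold fRx. ring.
Qed.
Lemma dfR_X x X Y : is_derive (fun t => fR x t Y) X (fRX x X Y).
Proof.
unfold fR, aa. auto_derive.
- exact I.
- unfold fRX, aa. ring.
Qed.
Lemma dfR_Y x X Y : is_derive (fun t => fR x X t) Y (fRY x X Y).
Proof.
unfold fR, bb. auto_derive.
- exact I.
- unfold fRY, bb. ring.
Qed.

Lemma dph_x x X Y : Y <> 0 -> is_derive (fun t => ph t X Y) x (phx x X Y).
Proof.
intros HY. pose proof (fun t => Dd_pos t X Y HY) as Hd.
unfold ph. unfold Dd in *. auto_derive.
- repeat match goal with |- _ /\ _ => split end; try exd; try exact I. specialize (Hd x). simpl in *. lra.
- rwD. unfold phx, Ddx, Dd. specialize (Hd x). field. simpl in *. lra.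
Qed.
Lemma dph_X x X Y : Y <> 0 -> is_derive (fun t => ph x t Y) X (phX x X Y).
Proof.
intros HY. pose proof (fun t => Dd_pos x t Y HY) as Hd.
unfold ph. unfold Dd, aa in *. auto_derive.
- repeat match goal with |- _ /\ _ => split end; try exact I. specialize (Hd X). simpl in *. lra.
- unfold phX, DdX, Dd, aa. specialize (Hd X). field. simpl in *. lra.
Qed.
Lemma dph_Y x X Y : Y <> 0 -> is_derive (fun t => ph x X t) Y (phY x X Y).
Proof.
intros HY. pose proof (Dd_pos x X Y HY) as Hd.
unfold ph. unfold Dd, bb in *. auto_derive.
- repeat match goal with |- _ /\ _ => split end; try exact I. simpl in *. lra.
- unfold phY, DdY, Dd, bb. field. simpl in *. lra.
Qed.

Lemma cc_fR x X Y : ccont3 fR x X Y.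
Proof. unfold ccont3, fR, aa, bb. cont; cside. Qed.
Lemma cc_fRx x X Y : ccont3 fRx x X Y.
Proof. unfold ccont3, fRx, aa, bb. cont; cside. Qed.
Lemma cc_fRX x X Y : ccont3 fRX x X Y.
Proof. unfold ccont3, fRX, aa, bb. cont; cside. Qed.
Lemma cc_fRY x X Y : ccont3 fRY x X Y.
Proof. unfold ccont3, fRY, aa, bb. cont; cside. Qed.
Lemma cc_ph x X Y : Y <> 0 -> ccont3 ph x X Y.
Proof. intros HY; pose proof (Dd_pos x X Y HY). unfold ccont3, ph, Dd, aa, bb in *. cont; cside.
 simpl in *; lra. Qed.
Lemma cc_phx x X Y : Y <> 0 -> ccont3 phx x X Y.
Proof. intros HY; pose proof (Dd_pos x X Y HY). unfold ccont3, phx, Ddx, Dd, aa, bb in *. cont; cside.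
 simpl in *. apply Rgt_not_eq; apply Rmult_lt_0_compat; [lra| apply Rmult_lt_0_compat; lra]. Qed.
Lemma cc_phX x X Y : Y <> 0 -> ccont3 phX x X Y.
Proof. intros HY; pose proof (Dd_pos x X Y HY). unfold ccont3, phX, DdX, Dd, aa, bb in *. cont; cside.
 simpl in *. apply Rgt_not_eq; apply Rmult_lt_0_compat; [lra| apply Rmult_lt_0_compat; lra]. Qed.
Lemma cc_phY x X Y : Y <> 0 -> ccont3 phY x X Y.
Proof. intros HY; pose proof (Dd_pos x X Y HY). unfold ccont3, phY, DdY, Dd, aa, bb in *. cont; cside.
 simpl in *. apply Rgt_not_eq; apply Rmult_lt_0_compat; [lra| apply Rmult_lt_0_compat; lra]. Qed.

Definition F1 x P := fst (F (x, P)).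
Definition F2 x P := snd (F (x, P)).

Lemma A1 x P : P <> 0 -> fR x (F1 x P) (F2 x P) = 0.
Proof.
intros HP. pose proof (den_pos x P HP) as Hd. unfold den in Hd.
unfold fR, aa, bb, F1, F2, F, XY_map; simpl.
destruct Hs as [E|E]; rewrite E; rewrite (HW x); field;
repeat match goal with |- _ /\ _ => split end; first [apply Wne | simpl in *; lra].
Qed.

Lemma Dd_F x P : P <> 0 -> Dd x (F1 x P) (F2 x P) = W ^ 2 / den x P.
Proof.
intros HP. pose proof (den_pos x P HP) as Hd. unfold den in *.
unfold Dd, aa, bb, F1, F2, F, XY_map; simpl.
destruct Hs as [E|E]; rewrite E; rewrite (HW x); field;
repeat match goal with |- _ /\ _ => split end; first [apply Wne | simpl in *; lra].
Qed.

Lemma A2 x P : P <> 0 -> ph x (F1 x P) (F2 x P) = P.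
Proof.
intros HP. pose proof (den_pos x P HP) as Hd.
unfold ph. rewrite Dd_F by auto. unfold bb, F2, F, XY_map, den in *; simpl.
field. split; auto. lra.
Qed.

Lemma A3 x P : P <> 0 -> fRx x (F1 x P) (F2 x P) = (h x - P ^ 2) * W ^ 2 / den x P.
Proof.
intros HP. pose proof (den_pos x P HP) as Hd. unfold den in *.
unfold fRx, aa, bb, F1, F2, F, XY_map; simpl.
destruct Hs as [E|E]; rewrite E; rewrite (HW x); field;
repeat match goal with |- _ /\ _ => split end; first [apply Wne | simpl in *; lra].
Qed.

Lemma R1 x X Y : fR x X Y * (u2 x - u1 x * aa X) + W * u1 x * bb Y ^ 2 = Dd x X Y * (du1 x * aa X - du2 x).
Proof. unfold fR, Dd. rewrite (HW x) at 1. ring. Qed.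
Lemma R2 x X Y : - fR x X Y * u1 x * bb Y + W * bb Y * (u2 x - u1 x * aa X) = Dd x X Y * du1 x * bb Y.
Proof. unfold fR, Dd. rewrite (HW x) at 1. ring. Qed.

Lemma A4 x X Y : Y <> 0 -> fR x X Y = 0 -> F (x, ph x X Y) = (X, Y).
Proof.
intros HY Hf. pose proof (Dd_pos x X Y HY) as HD.
assert (Hb : bb Y <> 0) by (unfold bb; apply Rmult_integral_contrapositive_currified; auto).
set (P := ph x X Y).
assert (HPD : P * Dd x X Y = W * bb Y) by (unfold P, ph; field; lra).
assert (E1 : du1 x * aa X - du2 x = u1 x * bb Y * P).
{ pose proof (R1 x X Y) as H. rewrite Hf in H. apply Rmult_eq_reg_l with (Dd x X Y); [|lra].
  rewrite <- H. transitivity (u1 x * bb Y * (P * Dd x X Y)); [|ring]. rewrite HPD. ring. }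
assert (E2 : P * (u2 x - u1 x * aa X) = du1 x * bb Y).
{ pose proof (R2 x X Y) as H. rewrite Hf in H. apply Rmult_eq_reg_l with (Dd x X Y * bb Y).
  2:{ apply Rmult_integral_contrapositive_currified; lra. }
  transitivity ((P * Dd x X Y) * bb Y * (u2 x - u1 x * aa X)); [ring|]. rewrite HPD.
  transitivity (bb Y * (W * bb Y * (u2 x - u1 x * aa X))); [ring|].
  replace (W * bb Y * (u2 x - u1 x * aa X)) with (Dd x X Y * du1 x * bb Y) by lra. ring. }
assert (HP : P <> 0).
{ intros E. rewrite E in HPD. apply Hb. apply Rmult_eq_reg_l with W; auto. lra. }
pose proof (den_pos x P HP) as Hd. unfold den in Hd.
assert (EN : P ^ 2 * u1 x * u2 x + du1 x * du2 x = aa X * (P ^ 2 * u1 x ^ 2 + du1 x ^ 2)).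
{ transitivity (P * u1 x * (P * (u2 x - u1 x * aa X)) + du1 x * (du2 x - du1 x * aa X) + aa X * (P ^ 2 * u1 x ^ 2 + du1 x ^ 2) + 0); [ring|].
  rewrite E2. replace (du2 x - du1 x * aa X) with (- (u1 x * bb Y * P)) by lra. ring. }
assert (EW : W * P = bb Y * (P ^ 2 * u1 x ^ 2 + du1 x ^ 2)).
{ rewrite (HW x). transitivity (du1 x * (P * (u2 x - u1 x * aa X)) + u1 x * P * (du1 x * aa X - du2 x)); [ring|].
  rewrite E1, E2. ring. }
unfold F, XY_map. cbv beta zeta. cbn [fst snd]. f_equal.
- rewrite EN. unfold aa. destruct Hs as [E|E]; rewrite E; field; split; auto; lra.
- apply Rmult_eq_reg_l with W; auto. unfold bb in EW. field_simplify; [|lra]. rewrite EW. field. lra.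
Qed.

Section LocalInv.
Variables (x0 dl X1 Y1 rB : R) (xG : R * R -> R).
Hypothesis HrB : 0 < rB.
Hypothesis HrY : rB <= Y1.
Hypothesis HxG_root : forall v, inB X1 Y1 rB v -> Rabs (xG v - x0) < dl /\ fR (xG v) (fst v) (snd v) = 0.
Hypothesis HxG_cont : forall v, inB X1 Y1 rB v -> continuous xG v.
Hypothesis Hnz : forall v, inB X1 Y1 rB v -> fRx (xG v) (fst v) (snd v) <> 0.

Lemma inB_Y v : inB X1 Y1 rB v -> 0 < snd v.
Proof. intros [_ H]. apply Rabs_def2 in H. lra. Qed.

Definition gX v := - (fRX (xG v) (fst v) (snd v) / fRx (xG v) (fst v) (snd v)).
Definition gY v := - (fRY (xG v) (fst v) (snd v) / fRx (xG v) (fst v) (snd v)).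
Definition g2X v := phx (xG v) (fst v) (snd v) * gX v + phX (xG v) (fst v) (snd v).
Definition g2Y v := phx (xG v) (fst v) (snd v) * gY v + phY (xG v) (fst v) (snd v).

Lemma xG_eps X Y : inB X1 Y1 rB (X, Y) -> forall eps, 0 < eps -> exists d, 0 < d /\ forall X' Y',
  Rabs (X' - X) < d -> Rabs (Y' - Y) < d -> Rabs (xG (X', Y') - xG (X, Y)) < eps.
Proof.
intros Hv eps Heps. destruct (proj1 (cont_eps2 xG (X, Y)) (HxG_cont _ Hv) eps Heps) as [d [Hd H]].
exists d; split; [auto|]. intros X' Y' H1 H2. apply (H (X', Y')); auto.
Qed.

Lemma inB_shiftX X Y k : inB X1 Y1 rB (X, Y) -> Rabs k < rB - Rabs (X - X1) -> inB X1 Y1 rB (X + k, Y).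
Proof.
intros [H1 H2] Hk. split; simpl in *; auto.
replace (X + k - X1) with (k + (X - X1)) by ring. eapply Rle_lt_trans; [apply Rabs_triang|]. lra.
Qed.
Lemma inB_shiftY X Y k : inB X1 Y1 rB (X, Y) -> Rabs k < rB - Rabs (Y - Y1) -> inB X1 Y1 rB (X, Y + k).
Proof.
intros [H1 H2] Hk. split; simpl in *; auto.
replace (Y + k - Y1) with (k + (Y - Y1)) by ring. eapply Rle_lt_trans; [apply Rabs_triang|]. lra.
Qed.

Lemma DX1 X Y : inB X1 Y1 rB (X, Y) -> is_derive (fun t => xG (t, Y)) X (gX (X, Y)).
Proof.
intros Hv. assert (Hrho : 0 < rB - Rabs (X - X1)) by (destruct Hv as [H1 _]; simpl in H1; lra).
unfold gX; simpl.
apply (ift_derive (fun x t => fR x t Y) (fun x t => fRx x t Y) (fun x t => fRX x t Y) (fun t => xG (t, Y)) X _ Hrho).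
- intros; apply dfR_x.
- intros; apply dfR_X.
- apply (sliceX fRx (xG (X, Y)) X Y). apply ccont3_cont3. apply cc_fRx.
- apply (sliceX fRX (xG (X, Y)) X Y). apply ccont3_cont3. apply cc_fRX.
- intros eps Heps. destruct (xG_eps X Y Hv eps Heps) as [d [Hd H]]. exists d; split; auto.
  intros t Ht. apply H; auto. unfold Rminus; rewrite Rplus_opp_r, Rabs_R0; auto.
- intros k Hk. apply (HxG_root (X + k, Y)). apply inB_shiftX; auto.
- apply (Hnz (X, Y) Hv).
Qed.

Lemma DY1 X Y : inB X1 Y1 rB (X, Y) -> is_derive (fun t => xG (X, t)) Y (gY (X, Y)).
Proof.
intros Hv. assert (Hrho : 0 < rB - Rabs (Y - Y1)) by (destruct Hv as [_ H1]; simpl in H1; lra).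
unfold gY; simpl.
apply (ift_derive (fun x t => fR x X t) (fun x t => fRx x X t) (fun x t => fRY x X t) (fun t => xG (X, t)) Y _ Hrho).
- intros; apply dfR_x.
- intros; apply dfR_Y.
- apply (sliceY fRx (xG (X, Y)) X Y). apply ccont3_cont3. apply cc_fRx.
- apply (sliceY fRY (xG (X, Y)) X Y). apply ccont3_cont3. apply cc_fRY.
- intros eps Heps. destruct (xG_eps X Y Hv eps Heps) as [d [Hd H]]. exists d; split; auto.
  intros t Ht. apply H; auto. unfold Rminus; rewrite Rplus_opp_r, Rabs_R0; auto.
- intros k Hk. apply (HxG_root (X, Y + k)). apply inB_shiftY; auto.
- apply (Hnz (X, Y) Hv).
Qed.

Lemma DX2 X Y : inB X1 Y1 rB (X, Y) -> is_derive (fun t => ph (xG (t, Y)) t Y) X (g2X (X, Y)).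
Proof.
intros Hv. pose proof (inB_Y _ Hv) as HY; simpl in HY.
unfold g2X; simpl.
apply (chain_derive (fun x t => ph x t Y) (fun x t => phx x t Y) (fun x t => phX x t Y) (fun t => xG (t, Y)) X 1 Rlt_0_1).
- intros; apply dph_x; lra.
- intros; apply dph_X; lra.
- apply (sliceX phx (xG (X, Y)) X Y). apply ccont3_cont3. apply cc_phx; lra.
- apply (sliceX phX (xG (X, Y)) X Y). apply ccont3_cont3. apply cc_phX; lra.
- intros eps Heps. destruct (xG_eps X Y Hv eps Heps) as [d [Hd H]]. exists d; split; auto.
  intros t Ht. apply H; auto. unfold Rminus; rewrite Rplus_opp_r, Rabs_R0; auto.
- apply DX1; auto.
Qed.

Lemma DY2 X Y : inB X1 Y1 rB (X, Y) -> is_derive (fun t => ph (xG (X, t)) X t) Y (g2Y (X, Y)).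
Proof.
intros Hv. pose proof (inB_Y _ Hv) as HY; simpl in HY.
unfold g2Y; simpl.
apply (chain_derive (fun x t => ph x X t) (fun x t => phx x X t) (fun x t => phY x X t) (fun t => xG (X, t)) Y Y HY).
- intros x t Ht; apply dph_x. apply Rabs_def2 in Ht. lra.
- intros x t Ht; apply dph_Y. apply Rabs_def2 in Ht. lra.
- apply (sliceY phx (xG (X, Y)) X Y). apply ccont3_cont3. apply cc_phx; lra.
- apply (sliceY phY (xG (X, Y)) X Y). apply ccont3_cont3. apply cc_phY; lra.
- intros eps Heps. destruct (xG_eps X Y Hv eps Heps) as [d [Hd H]]. exists d; split; auto.
  intros t Ht. apply H; auto. unfold Rminus; rewrite Rplus_opp_r, Rabs_R0; auto.
- apply DY1; auto.
Qed.

Definition Gm (v : R * R) : R * R := (xG v, ph (xG v) (fst v) (snd v)).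

Ltac ccpick Hv :=
  match goal with
  | |- ccont3 fRX _ _ _ => apply cc_fRX
  | |- ccont3 fRx _ _ _ => apply cc_fRx
  | |- ccont3 fRY _ _ _ => apply cc_fRY
  | |- ccont3 phx _ _ _ => apply cc_phx; pose proof (inB_Y _ Hv); simpl in *; lra
  | |- ccont3 phX _ _ _ => apply cc_phX; pose proof (inB_Y _ Hv); simpl in *; lra
  | |- ccont3 phY _ _ _ => apply cc_phY; pose proof (inB_Y _ Hv); simpl in *; lra
  end.

Ltac leftover Hv :=
  match goal with
  | |- continuous (fun w => ?phi (xG w) (fst w) (snd w)) ?v =>
      apply (ccomp3 phi xG v); [apply HxG_cont; exact Hv | ccpick Hv]
  | |- _ <> 0 => cbv beta; apply (Hnz _ Hv)
  end.

Lemma C1G : C1_on (inB X1 Y1 rB) Gm.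
Proof.
split; intros [X Y] Hv.
- split; [|split; [|split]].
  + exists (gX (X, Y)). apply DX1; auto.
  + exists (gY (X, Y)). apply DY1; auto.
  + apply (continuous_ext_loc _ gX).
    * eapply filter_imp; [|apply box_open; exact Hv]. intros [X' Y'] Hq.
      unfold partial1; simpl. symmetry. apply is_derive_unique. apply DX1; auto.
    * unfold gX. cont; leftover Hv.
  + apply (continuous_ext_loc _ gY).
    * eapply filter_imp; [|apply box_open; exact Hv]. intros [X' Y'] Hq.
      unfold partial2; simpl. symmetry. apply is_derive_unique. apply DY1; auto.
    * unfold gY. cont; leftover Hv.
- split; [|split; [|split]].
  + exists (g2X (X, Y)). apply DX2; auto.
  + exists (g2Y (X, Y)). apply DY2; auto.
  + apply (continuous_ext_loc _ g2X).
    * eapply filter_imp; [|apply box_open; exact Hv]. intros [X' Y'] Hq.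
      unfold partial1; simpl. symmetry. apply is_derive_unique. apply DX2; auto.
    * unfold g2X, gX. cont; leftover Hv.
  + apply (continuous_ext_loc _ g2Y).
    * eapply filter_imp; [|apply box_open; exact Hv]. intros [X' Y'] Hq.
      unfold partial2; simpl. symmetry. apply is_derive_unique. apply DY2; auto.
    * unfold g2Y, gY. cont; leftover Hv.
Qed.

End LocalInv.

Lemma Fpair q : F q = (F1 (fst q) (snd q), F2 (fst q) (snd q)).
Proof. destruct q; unfold F1, F2; simpl; apply surjective_pairing. Qed.

Lemma Fcont q : snd q <> 0 -> continuous F q.
Proof.
intros Hq.
apply continuous_ext with (f := fun q => (X0 + s * / W * ((snd q ^ 2 * u1 (fst q) * u2 (fst q) + du1 (fst q) * du2 (fst q))
   / (snd q ^ 2 * u1 (fst q) ^ 2 + du1 (fst q) ^ 2)), snd q / (snd q ^ 2 * u1 (fst q) ^ 2 + du1 (fst q) ^ 2))).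
{ intros [a b]; reflexivity. }
apply cpair; cont; cside; nzside.
Qed.

Lemma C1_sub (D D' : R * R -> Prop) G : C1_on D G -> (forall p, D' p -> D p) -> C1_on D' G.
Proof. intros [H1 H2] Hs'; split; intros p Hp; [apply H1|apply H2]; auto. Qed.

Lemma local_inv p0 : H0_set h p0 ->
    exists (U V : R * R -> Prop) (G : R * R -> R * R),
      open U /\ open V /\ U p0 /\
      (forall q, U q -> H0_set h q) /\ (forall v, V v -> H_set v) /\
      (forall q, U q -> V (F q)) /\ (forall v, V v -> U (G v)) /\
      (forall q, U q -> G (F q) = q) /\ (forall v, V v -> F (G v) = v) /\
      C1_on V G.
Proof.
destruct p0 as [x0 P0]. intros [HP0 Hh0]. simpl in HP0, Hh0.
set (X1 := F1 x0 P0). set (Y1 := F2 x0 P0).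
assert (HP0' : P0 <> 0) by lra.
pose proof (den_pos x0 P0 HP0') as Hden.
assert (HY1 : 0 < Y1).
{ unfold Y1, F2, F, XY_map. cbv beta zeta. cbn [fst snd]. unfold den in Hden. apply Rdiv_lt_0_compat; lra. }
assert (Hroot0 : fR x0 X1 Y1 = 0) by (apply A1; auto).
assert (Hfx0 : fRx x0 X1 Y1 <> 0).
{ unfold X1, Y1. rewrite A3 by auto. unfold Rdiv.
  apply Rmult_integral_contrapositive_currified; [apply Rmult_integral_contrapositive_currified|].
  - intros E. apply Hh0. lra.
  - apply pow_nonzero; auto.
  - apply Rinv_neq_0_compat; lra. }
assert (HN : exists dN, 0 < dN /\ dN <= P0 /\ forall x P, Rabs (x - x0) < dN -> Rabs (P - P0) < dN -> P > 0 /\ P ^ 2 <> h x).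
{ assert (Hk : continuous (fun q : R * R => snd q ^ 2 - h (fst q)) (x0, P0)) by (cont; cside).
  assert (Hk0 : 0 < Rabs (P0 ^ 2 - h x0)) by (apply Rabs_pos_lt; intros E; apply Hh0; lra).
  destruct (proj1 (cont_eps2 _ _) Hk _ Hk0) as [d [Hd Hdk]].
  exists (Rmin d P0). split; [apply Rmin_pos; auto|]. split; [apply Rmin_r|].
  intros x P Hx HP.
  assert (Hx' : Rabs (x - x0) < d) by (eapply Rlt_le_trans; [exact Hx|apply Rmin_l]).
  assert (HP' : Rabs (P - P0) < d) by (eapply Rlt_le_trans; [exact HP|apply Rmin_l]).
  assert (HP'' : Rabs (P - P0) < P0) by (eapply Rlt_le_trans; [exact HP|apply Rmin_r]).
  specialize (Hdk (x, P) Hx' HP'). cbv beta in Hdk. cbn [fst snd] in Hdk. split.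
  - apply Rabs_def2 in HP''. lra.
  - intros E. rewrite E in Hdk. replace (h x - h x - (P0 ^ 2 - h x0)) with (- (P0 ^ 2 - h x0)) in Hdk by ring.
    rewrite Rabs_Ropp in Hdk. lra. }
destruct HN as [dN [HdN [HdNP HNd]]].
assert (Hsg : exists sg, sg <> 0 /\ sg * fRx x0 X1 Y1 > 0).
{ destruct (Rlt_dec 0 (fRx x0 X1 Y1)).
  - exists 1. split; lra.
  - exists (-1). split; [lra|]. assert (fRx x0 X1 Y1 < 0) by lra. lra. }
destruct Hsg as [sg [Hsg0 Hsg]].
set (fS := fun x X Y => sg * fR x X Y). set (fSx := fun x X Y => sg * fRx x X Y).
assert (DfS : forall x X Y, is_derive (fun y => fS y X Y) x (fSx x X Y)).
{ intros. unfold fS, fSx. apply is_derive_scal. apply dfR_x. }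
assert (CfS : forall x X Y, cont3 fS x X Y).
{ intros. apply ccont3_cont3. unfold ccont3, fS. cont. apply cc_fR. }
assert (CfSx : forall x X Y, cont3 fSx x X Y).
{ intros. apply ccont3_cont3. unfold ccont3, fSx. cont. apply cc_fRx. }
assert (HS0 : fS x0 X1 Y1 = 0) by (unfold fS; rewrite Hroot0; ring).
destruct (ift_exist fS fSx DfS CfS CfSx x0 X1 Y1 dN HS0 Hsg HdN) as [d1 [r1 [Hd1 [Hd1N [Hr1 [Hmono _]]]]]].
destruct (ift_exist fS fSx DfS CfS CfSx x0 X1 Y1 d1 HS0 Hsg Hd1) as [d2 [r2 [Hd2 [Hd21 [Hr2 [_ Hex]]]]]].
set (rB := Rmin (Rmin r1 r2) Y1).
assert (HrB : 0 < rB) by (unfold rB; repeat apply Rmin_pos; auto).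
assert (HrB1 : rB <= r1) by (unfold rB; eapply Rle_trans; [apply Rmin_l|apply Rmin_l]).
assert (HrB2 : rB <= r2) by (unfold rB; eapply Rle_trans; [apply Rmin_l|apply Rmin_r]).
assert (HrBY : rB <= Y1) by (unfold rB; apply Rmin_r).
assert (HfS : forall x X Y, fS x X Y = 0 -> fR x X Y = 0).
{ intros x X Y E. unfold fS in E. apply Rmult_integral in E. destruct E; [contradiction|auto]. }
assert (Hc : forall v : R * R, exists x, inB X1 Y1 rB v -> Rabs (x - x0) <= d2 /\ fR x (fst v) (snd v) = 0).
{ intros v. destruct (Rlt_dec (Rabs (fst v - X1)) rB) as [H1|H1]; [|exists 0; intros [? ?]; contradiction].
  destruct (Rlt_dec (Rabs (snd v - Y1)) rB) as [H2|H2]; [|exists 0; intros [? ?]; contradiction].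
  destruct (Hex (fst v) (snd v)) as [x [Hx Ex]]; try lra.
  exists x. intros _. split; auto. }
destruct (fchoice _ Hc) as [xG HxG].
assert (Hmono' : forall v, inB X1 Y1 rB v -> forall y, Rabs (y - x0) <= d1 -> fSx y (fst v) (snd v) > 0).
{ intros v [H1 H2] y Hy. apply Hmono; auto; lra. }
assert (Huniq : forall v, inB X1 Y1 rB v -> forall x, Rabs (x - x0) <= d1 -> fR x (fst v) (snd v) = 0 -> x = xG v).
{ intros v Hv x Hx Ex. destruct (HxG v Hv) as [Hx' Ex'].
  apply (ift_unique fS fSx DfS (fst v) (snd v) x0 d1 x (xG v));
    [apply Hmono'; auto | lra | lra | unfold fS; rewrite Ex; ring | unfold fS; rewrite Ex'; ring]. }
assert (Hnz : forall v, inB X1 Y1 rB v -> fRx (xG v) (fst v) (snd v) <> 0).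
{ intros v Hv. destruct (HxG v Hv) as [Hx _]. pose proof (Hmono' v Hv (xG v) ltac:(lra)) as Hp.
  unfold fSx in Hp. intros E. rewrite E in Hp. lra. }
assert (HxGc : forall v, inB X1 Y1 rB v -> continuous xG v).
{ intros v Hv. apply cont_eps2. intros eps Heps.
  destruct (HxG v Hv) as [Hxv Exv].
  assert (HSv : fS (xG v) (fst v) (snd v) = 0) by (unfold fS; rewrite Exv; ring).
  assert (HSxv : fSx (xG v) (fst v) (snd v) > 0) by (apply Hmono'; auto; lra).
  assert (Hm0 : 0 < Rmin eps (d1 - d2)) by (apply Rmin_pos; lra).
  destruct (ift_exist fS fSx DfS CfS CfSx (xG v) (fst v) (snd v) _ HSv HSxv Hm0) as [d3 [r3 [Hd3 [Hd3m [Hr3 [_ Hex3]]]]]].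
  destruct Hv as [Hv1 Hv2].
  set (m := Rmin (rB - Rabs (fst v - X1)) (rB - Rabs (snd v - Y1))).
  assert (Hm : 0 < m) by (apply Rmin_pos; lra).
  assert (Hm1 : m <= rB - Rabs (fst v - X1)) by apply Rmin_l.
  assert (Hm2 : m <= rB - Rabs (snd v - Y1)) by apply Rmin_r.
  assert (Hd3e : d3 < eps) by (pose proof (Rmin_l eps (d1 - d2)); lra).
  assert (Hd3d : d3 < d1 - d2) by (pose proof (Rmin_r eps (d1 - d2)); lra).
  exists (Rmin r3 m). split; [apply Rmin_pos; auto|].
  intros q Hq1 Hq2.
  assert (Hq1' : Rabs (fst q - fst v) < r3) by (eapply Rlt_le_trans; [exact Hq1|apply Rmin_l]).
  assert (Hq2' : Rabs (snd q - snd v) < r3) by (eapply Rlt_le_trans; [exact Hq2|apply Rmin_l]).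
  assert (Hq1'' : Rabs (fst q - fst v) < m) by (eapply Rlt_le_trans; [exact Hq1|apply Rmin_r]).
  assert (Hq2'' : Rabs (snd q - snd v) < m) by (eapply Rlt_le_trans; [exact Hq2|apply Rmin_r]).
  assert (HqB : inB X1 Y1 rB q).
  { split.
    - replace (fst q - X1) with ((fst q - fst v) + (fst v - X1)) by ring.
      eapply Rle_lt_trans; [apply Rabs_triang|]. lra.
    - replace (snd q - Y1) with ((snd q - snd v) + (snd v - Y1)) by ring.
      eapply Rle_lt_trans; [apply Rabs_triang|]. lra. }
  destruct (Hex3 (fst q) (snd q) Hq1' Hq2') as [x [Hx Ex]].
  assert (Hxx0 : Rabs (x - x0) <= d1).
  { replace (x - x0) with ((x - xG v) + (xG v - x0)) by ring.
    eapply Rle_trans; [apply Rabs_triang|]. lra. }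
  rewrite <- (Huniq q HqB x Hxx0 (HfS _ _ _ Ex)). lra. }
assert (HGc : forall v, inB X1 Y1 rB v -> continuous (Gm xG) v).
{ intros v Hv. assert (Hy : 0 < snd v) by (destruct Hv as [_ H2]; apply Rabs_def2 in H2; lra).
  unfold Gm. apply cpair; [apply HxGc; auto|].
  apply (ccomp3 ph xG v); [apply HxGc; auto|]. apply cc_ph.
  apply Rgt_not_eq. exact Hy. }
assert (HNd1 : forall q, inB x0 P0 d1 q -> H0_set h q).
{ intros q [H1 H2]. destruct (HNd (fst q) (snd q)) as [Ha Hb]; try lra. split; auto. }
set (V := fun v => inB X1 Y1 rB v /\ inB x0 P0 d1 (Gm xG v)).
set (U := fun q => inB x0 P0 d1 q /\ V (F q)).
assert (HopenV : open V).
{ intros v [Bv Nv]. apply filter_and.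
  - apply box_open; auto.
  - exact (HGc v Bv _ (box_open _ _ _ _ Nv)). }
assert (HFG : forall v, inB X1 Y1 rB v -> F (Gm xG v) = v).
{ intros v Hv. destruct (HxG v Hv) as [_ E]. unfold Gm. rewrite A4; auto.
  - destruct v; reflexivity.
  - destruct Hv as [_ H2]. apply Rabs_def2 in H2. lra. }
exists U, V, (Gm xG).
split; [|split; [|split; [|split; [|split; [|split; [|split; [|split; [|split]]]]]]]].
- intros q [Nq Vq]. apply filter_and.
  + apply box_open; auto.
  + assert (Hq0 : @snd R R q <> 0) by (destruct (HNd1 q Nq) as [Ha _]; apply Rgt_not_eq; exact Ha).
    exact (Fcont q Hq0 V (HopenV _ Vq)).
- exact HopenV.
- assert (HN0 : inB x0 P0 d1 (x0, P0)).
  { split; simpl; unfold Rminus; rewrite Rplus_opp_r, Rabs_R0; auto. }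
  split; auto. unfold V. rewrite Fpair. simpl. fold X1 Y1.
  assert (HB0 : inB X1 Y1 rB (X1, Y1)).
  { split; simpl; unfold Rminus; rewrite Rplus_opp_r, Rabs_R0; auto. }
  split; auto.
  assert (E : x0 = xG (X1, Y1)).
  { apply (Huniq (X1, Y1) HB0); simpl; auto. unfold Rminus; rewrite Rplus_opp_r, Rabs_R0; lra. }
  unfold Gm; simpl. rewrite <- E. unfold X1, Y1. rewrite A2 by auto. exact HN0.
- intros q [Nq _]. apply HNd1; auto.
- intros v [Bv _]. unfold H_set. destruct Bv as [_ H2]. apply Rabs_def2 in H2. lra.
- intros q [_ Vq]. exact Vq.
- intros v [Bv Nv]. pose proof (HFG v Bv) as E. split; [exact Nv|]. change (V (F (Gm xG v))). rewrite E. split; auto.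
- intros [x P] [Nq [Bq _]]. rewrite Fpair in Bq |- *. simpl in Bq |- *.
  assert (HP : P <> 0) by (destruct (HNd1 (x, P) Nq); simpl in *; lra).
  assert (E : x = xG (F1 x P, F2 x P)).
  { apply (Huniq _ Bq); simpl.
    - destruct Nq as [N1 _]; simpl in N1; lra.
    - apply A1; auto. }
  unfold Gm; simpl. rewrite <- E. rewrite A2; auto.
- intros v [Bv _]. apply HFG; auto.
- eapply C1_sub.
  + eapply (C1G x0 d1 X1 Y1 rB xG); auto.
    intros v Hv. destruct (HxG v Hv) as [H1 H2]. split; auto. lra.
  + intros v [Bv _]; exact Bv.
Qed.

Lemma main_result : local_diffeo (H0_set h) H_set F /\ pullback_eq (H0_set h) F g_H (g_h h).
Proof.
split.
- split; [|split].
  + intros [x P] [HP _]. simpl in HP. unfold H_set. rewrite Fpair. simpl. unfold F2, F, XY_map.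
    cbv beta zeta. cbn [fst snd]. pose proof (den_pos x P ltac:(lra)) as Hd. unfold den in Hd.
    apply Rdiv_lt_0_compat; lra.
  + apply (C1_sub _ _ _ C1F). intros p [Hp _]. lra.
  + intros p Hp. apply local_inv; auto.
- intros p [Hp _] v w. apply pullbackF. lra.
Qed.
End Main.

Theorem lemma2p14
  (h : R -> R) (u1 du1 u2 du2 : R -> R) (W X0 s : R)
  (Hh : forall x, continuous h x)
  (Hu1 : forall x, is_derive u1 x (du1 x))
  (Hdu1 : forall x, is_derive du1 x (- h x * u1 x))
  (Hu2 : forall x, is_derive u2 x (du2 x))
  (Hdu2 : forall x, is_derive du2 x (- h x * u2 x))
  (Hind : forall a b : R, (forall x, a * u1 x + b * u2 x = 0) -> a = 0 /\ b = 0)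
  (HW : forall x, W = du1 x * u2 x - u1 x * du2 x)
  (HW0 : W <> 0)
  (Hs : s = 1 \/ s = -1) :
  local_diffeo (H0_set h) H_set (XY_map u1 du1 u2 du2 W X0 s) /\
  pullback_eq (H0_set h) (XY_map u1 du1 u2 du2 W X0 s) g_H (g_h h).
Proof.
  apply (main_result h u1 du1 u2 du2 W X0 s); auto.
Qed.
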